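(* For every $n\in\mathbb N$, the invariant $c_n$ of ordered virtual tangles is a GPV finite type invariant of degree $n$.
   Context: An $n$-tangle ($n\ge 1$) is a collection of $n$ disjoint oriented intervals (''strings'') and finitely many oriented circles properly embedded in the 3-ball with string endpoints at prescribed boundary points; virtual tangle diagrams may contain, besides classical (real) crossings, virtual crossings (no over/under information), and virtual tangles are such diagrams modulo classical and virtual Reidemeister moves. For a string, its source is its input and its target its output. A tangle with $n$ strings is ordered if its $2n$ endpoints are numbered by integers $j_1<\dots<j_{2n}$ (up to monotone relabeling) so that every input receives some $j_{2k-1}$ and every output some $j_{2k}$; the ordering is coherent if for each $k$ the string with input $j_{2k-1}$ has output $j_{2k}$. For an ordered tangle diagram $D$: a state $S$ is a set of real crossings; $D(S)$ is obtained by smoothing each crossing of $S$ respecting orientations and inherits the endpoint numbering. $S$ is coherent if $D(S)$ has no closed components and its ordering is coherent. For coherent $S$, traverse $D(S)$ along the string from $j_1$ to $j_2$, then the string from $j_3$ to $j_4$, etc.; the neighborhood of each smoothed crossing is passed twice, and $S$ is descending if for each crossing of $S$ its neighborhood is first entered along the former overpass. $\operatorname{sign}(S)$ is the product of local writhes of the crossings of $S$. Define $c_n(D)=\sum\operatorname{sign}(S)$ over descending states with $n$ crossings; it is an invariant of ordered virtual tangles. GPV finite type. Given a virtual tangle diagram $D$ with $m$ marked, ordered real crossings $d_1,\dots,d_m$ and $I=(i_1,\dots,i_m)\in\{0,1\}^m$, let $D_I$ be obtained from $D$ by turning each $d_k$ with $i_k=1$ into a virtual crossing, and $|I|=\sum_k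 i_k$. An invariant $v$ is of GPV degree less than $m$ if $\sum_{I\in\{0,1\}^m}(-1)^{|I|}v(D_I)=0$ for all such $D$ and choices of crossings. $v$ is of GPV degree $n$ if it is of degree less than $n+1$ but not of degree less than $n$. *)

(* Defs.v *)
From mathcomp Require Import all_boot all_order all_algebra.
Set Implicit Arguments. Unset Strict Implicit. Unset Printing Implicit Defensive.
Import Order.TTheory GRing.Theory Num.Theory.

(* Points of a diagram with [k] strings and [na] crossings:
   - inl (inl i) : the source (input) of string i; its endpoint label is 2i
                   (i.e. j_{2i+1} in the paper's 1-based numbering);
   - inl (inr j) : the output endpoint with label 2j+1 (j_{2j+2});
   - inr (a, true)  : the passage of the curve through crossing a along the
                      overpass (for a virtual crossing: along one branch);
   - inr (a, false) : the passage through crossing a along the underpass. *)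
Notation node k na := ('I_k + 'I_k + 'I_na * bool)%type.

Definition is_start k na (x : node k na) :=
  if x is inl (inl _) then true else false.
Definition is_end k na (x : node k na) :=
  if x is inl (inr _) then true else false.

(* [nxt x] is the next point met when following the oriented curve from x;
   output endpoints have no successor, inputs have no predecessor and every
   other point has exactly one successor and one predecessor. *)
Definition wf_next k na (nxt : node k na -> option (node k na)) :=
  [/\ forall x, (nxt x == None) = is_end x,
      forall x y, nxt x = Some y -> ~~ is_start y
    & forall x y, nxt x != None -> nxt x = nxt y -> x = y].

(* A virtual tangle diagram (Gauss diagram form):
   [gk] strings (with the endpoint ordering encoded as above), [gna]
   crossings of which those in [greal] are real (the others virtual),
   local writhes [gsign] (true = +1, false = -1) of real crossings,
   and [gcirc] closed components carrying no crossing at all. *)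
Record GD := mkGD {
  gk : nat;
  gna : nat;
  gcirc : nat;
  gnext : node gk gna -> option (node gk gna);
  gsign : 'I_gna -> bool;
  greal : {set 'I_gna};
  gk_pos : 0 < gk;
  gnext_wf : wf_next gnext }.

(* successor function of D(S): smoothing crossing a (respecting orientations)
   connects the incoming overpass to the outgoing underpass and vice versa. *)
Definition smooth_next (D : GD) (S : {set 'I_(gna D)})
  (x : node (gk D) (gna D)) : option (node (gk D) (gna D)) :=
  match x with
  | inr (a, b) => if a \in S then @gnext D (inr (a, ~~ b)) else @gnext D x
  | _ => @gnext D x
  end.

(* the walk from point x (at most #|node| points, which suffices for paths) *)
Definition walk k na (f : node k na -> option (node k na)) (x : node k na)
  : seq (node k na) :=
  pmap id (traject (obind f) (Some x) #|{: node k na}|).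

(* traversal of D(S): string from j_1 to j_2, then from j_3 to j_4, ... *)
Definition traversal (D : GD) (S : {set 'I_(gna D)}) : seq (node (gk D) (gna D)) :=
  flatten [seq walk (smooth_next S) (inl (inl i)) | i <- enum 'I_(gk D)].

(* S coherent: D(S) has no closed components, and its ordering is coherent *)
Definition coherent (D : GD) (S : {set 'I_(gna D)}) : bool :=
  [&& gcirc D == 0,
      [forall x : node (gk D) (gna D), x \in traversal S]
    & [forall i : 'I_(gk D),
         last (inl (inl i)) (walk (smooth_next S) (inl (inl i)))
           == inl (inr i)]].

Definition descending (D : GD) (S : {set 'I_(gna D)}) : bool :=
  [forall a in S,
     index (inr (a, true)) (traversal S) < index (inr (a, false)) (traversal S)].

Definition state_sign (D : GD) (S : {set 'I_(gna D)}) : int :=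
  \prod_(a in S) (if @gsign D a then 1 else -1)%R.

Definition c_inv (n : nat) (D : GD) : int :=
  (\sum_(S : {set 'I_(gna D)} |
          [&& S \subset @greal D, #|S| == n, coherent S & descending S])
     state_sign S)%R.

Definition virt (D : GD) (T : {set 'I_(gna D)}) : GD :=
  @mkGD (gk D) (gna D) (gcirc D) (@gnext D) (@gsign D) (@greal D :\: T)
        (@gk_pos D) (@gnext_wf D).

Definition gpv_deg_lt (v : GD -> int) (p : nat) : Prop :=
  forall (D : GD) (d : 'I_p -> 'I_(gna D)),
    injective d -> (forall i, d i \in @greal D) ->
    (\sum_(I : {ffun 'I_p -> bool})
        (-1) ^+ #|[set i | I i]| * v (virt [set d i | i in [set j | I j]]))%R
    = 0%R.

Definition gpv_degree (v : GD -> int) (n : nat) : Prop :=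
  gpv_deg_lt v n.+1 /\ ~ gpv_deg_lt v n.

(* Main.v *)
Require Import Defs.
From mathcomp Require Import all_boot all_order all_algebra zify.
Set Implicit Arguments. Unset Strict Implicit. Unset Printing Implicit Defensive.
Import Order.TTheory GRing.Theory Num.Theory.
Local Open Scope ring_scope.

Lemma disj_im (T U : finType) (d : U -> T) (S : {set T}) (A : {set U}) :
  [disjoint S & [set d i | i in A]] = [forall i, (i \in A) ==> (d i \notin S)].
Proof.
apply/idP/forallP => [H i|H].
  apply/implyP=> iA; apply/negP=> dS.
  by move: (disjointFr H dS); rewrite imset_f.
rewrite disjoint_sym disjoint_subset; apply/subsetP=> x /imsetP [i iA ->].
by rewrite inE; move/implyP: (H i) => /(_ iA).
Qed.

Lemma inner_sum (T : finType) p (d : 'I_p -> T) (S : {set T}) :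
  (\sum_(I : {ffun 'I_p -> bool})
     (if [disjoint S & [set d i | i in [set j | I j]]]
      then (-1) ^+ #|[set i | I i]| else 0 : int))
  = if [forall i, d i \in S] then 1 else 0.
Proof.
pose g i (b : bool) : int := if b then (if d i \in S then 0 else -1) else 1.
have E1 : forall I : {ffun 'I_p -> bool},
   (if [disjoint S & [set d i | i in [set j | I j]]]
      then (-1) ^+ #|[set i | I i]| else 0 : int) = \prod_i g i (I i).
  move=> I; rewrite disj_im; case: ifP => Hd.
    rewrite -prodr_const big_mkcond /=; apply: eq_bigr => i _.
    move/forallP: Hd => /(_ i); rewrite inE /g.
    by case: (I i) => //= /negbTE ->.
  move/negbT: Hd; rewrite negb_forall => /existsP [i].
  rewrite negb_imply inE negbK => /andP [Ii dS].
  by rewrite (bigD1 i) //= /g Ii dS mul0r.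
rewrite (eq_bigr _ (fun I _ => E1 I)) -bigA_distr_bigA /=.
case: ifP => H.
  apply: big1 => i _; rewrite big_bool /g.
  by move/forallP: H => /(_ i) ->.
move/negbT: H; rewrite negb_forall => /existsP [i dS].
by rewrite (bigD1 i) //= big_bool /g (negbTE dS) mul0r.
Qed.

Lemma c_virt n (D : GD) (T : {set 'I_(gna D)}) :
  c_inv n (virt T) = \sum_(S : {set 'I_(gna D)} |
     [&& S \subset greal D :\: T, #|S| == n, coherent S & descending S]) state_sign S.
Proof. by []. Qed.

Lemma alt_sum n (D : GD) p (d : 'I_p -> 'I_(gna D)) :
 (\sum_(I : {ffun 'I_p -> bool})
    (-1) ^+ #|[set i | I i]| * c_inv n (virt [set d i | i in [set j | I j]]))
 = \sum_(S : {set 'I_(gna D)} | [&& S \subset greal D, [forall i, d i \in S],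
        #|S| == n, coherent S & descending S]) state_sign S.
Proof.
under eq_bigr => I _ do rewrite c_virt big_mkcond mulr_sumr.
rewrite exchange_big /= [RHS]big_mkcond /=; apply: eq_bigr => S _.
transitivity (\sum_(I : {ffun 'I_p -> bool})
   (if [&& S \subset greal D, #|S| == n, coherent S & descending S] then
    (if [disjoint S & [set d i | i in [set j | I j]]]
      then (-1) ^+ #|[set i | I i]| else 0 : int) * state_sign S else 0)).
  apply: eq_bigr => I _; rewrite subsetD.
  case: (S \subset greal D); rewrite /= ?mulr0 //.
  case: (#|S| == n) (coherent S) (descending S) => [] [] []; rewrite /= ?mulr0 //.
  all: rewrite ?andbT ?andbF ?mulr0 //.
  by case: ifP; rewrite ?mul0r ?mulr0.
case: (boolP [&& S \subset greal D, #|S| == n, coherent S & descending S]) => H.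
  rewrite -mulr_suml inner_sum.
  move: H => /and4P [-> -> -> ->] /=.
  by case: ifP; rewrite ?mul1r ?mul0r.
rewrite big1 //; case: ifP => [/and5P [H1 _ H2 H3 H4]|//].
by rewrite H1 H2 H3 H4 in H.
Qed.

Lemma deg_lt n : gpv_deg_lt (c_inv n) n.+1.
Proof.
move=> D d dinj _; rewrite alt_sum big_pred0 // => S.
apply/negP => /and5P [_ /forallP H /eqP cS _ _].
have : (#|[set d i | i : 'I_n.+1]| <= #|S|)%N.
  by apply: subset_leq_card; apply/subsetP => x /imsetP [i _ ->]; apply: H.
by rewrite card_imset // card_ord cS ltnn.
Qed.

Section Ex.
Variable n : nat.
Local Open Scope nat_scope.
Notation Nd := (node n.*2.+1 n).

Definition ex_next (x : Nd) : option Nd :=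
  match x with
  | inl (inl j) =>
      match (insub (val j)./2 : option 'I_n) with
      | Some a => Some (inr (a, ~~ odd j))
      | None => Some (inl (inr j))
      end
  | inl (inr _) => None
  | inr (a, b) => Some (inl (inr (inord (a.*2 + b))))
  end.

Lemma inord_val2 (a : 'I_n) (b : bool) : val (inord (a.*2 + b) : 'I_n.*2.+1) = a.*2 + b.
Proof.
apply: inordK; have := ltn_ord a; rewrite ltnS -!addnn; case: b => /=; lia.
Qed.

Lemma half_ab (a : nat) (b : bool) : (a.*2 + b)./2 = a.
Proof. by rewrite addnC half_bit_double. Qed.
Lemma odd_ab (a : nat) (b : bool) : odd (a.*2 + b) = b.
Proof. by rewrite oddD odd_double; case: b. Qed.

Lemma ex_wf : wf_next ex_next.
Proof.
split.
- by case=> [[j|j]|[a b]] //=; case: insubP.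
- move=> x y; case: x => [[j|j]|[a b]] //=; last by case=> <-.
  by case: insubP => [a _ _|_] [<-].
- move=> x y; case: x => [[j|j]|[a b]] //= _.
  + case: insubP => [a Ha Ea|Hn]; case: y => [[j'|j']|[a' b']] //=;
      try (case: insubP => [a' Ha' Ea'|Hn'] //=).
    * move=> [e1 e2].
      congr (inl (inl _)); apply: val_inj; rewrite -[val j]odd_double_half.
      by rewrite -[val j']odd_double_half -Ea -Ea' e1 -[odd j]negbK e2 negbK.
    * by case=> ->.
    * move=> [e]; move: Hn; rewrite e inord_val2 half_ab.
      by rewrite ltn_ord.
  + case: y => [[j'|j']|[a' b']] //=.
    * case: insubP => [a' Ha' Ea'|Hn'] //= [e].
      by move: Hn'; rewrite -e inord_val2 half_ab ltn_ord.
    * move=> [e]; have := congr1 val e; rewrite !inord_val2 => e2.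
      have ea : a = a' by apply: ord_inj; rewrite -(half_ab a b) e2 half_ab.
      have eb : b = b' by rewrite -(odd_ab a b) e2 odd_ab.
      by rewrite ea eb.
Qed.
End Ex.

Lemma pmap_trajN (T : Type) (f : T -> option T) m :
  pmap id (traject (obind f) None m) = [::].
Proof. by elim: m. Qed.

Lemma pmap_trajS (T : Type) (f : T -> option T) x y m : f x = Some y ->
  pmap id (traject (obind f) (Some x) m.+1) = x :: pmap id (traject (obind f) (Some y) m).
Proof. by move=> /= ->. Qed.

Lemma pmap_traj1 (T : Type) (f : T -> option T) x m : f x = None ->
  pmap id (traject (obind f) (Some x) m.+1) = [:: x].
Proof. by move=> /= ->; rewrite pmap_trajN. Qed.

Section Ex2.
Variable n : nat.
Local Open Scope nat_scope.
Notation Nd := (node n.*2.+1 n).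

Definition exD : GD := @mkGD n.*2.+1 n 0 (@ex_next n) (fun _ => true) setT (ltn0Sn _) (@ex_wf n).

Definition wseq (i : 'I_n.*2.+1) : seq Nd :=
  match (insub (val i)./2 : option 'I_n) with
  | Some a => [:: inl (inl i); inr (a, ~~ odd i); inl (inr i)]
  | None => [:: inl (inl i); inl (inr i)]
  end.

Lemma card_Nd : #|{: Nd}| = (n.*2.+1 + n.*2.+1 + n * 2).
Proof. by rewrite !card_sum card_prod !card_ord card_bool. Qed.

Lemma walk_ex (i : 'I_n.*2.+1) :
  walk (smooth_next (D := exD) setT) (inl (inl i)) = wseq i.
Proof.
rewrite /walk /wseq.
have HN := card_Nd; move: HN; set N := #|_| => HN.
have Hs : smooth_next (D := exD) setT (inl (inl i)) =
  match (insub (val i)./2 : option 'I_n) with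
      | Some a => Some (inr (a, ~~ odd i))
      | None => Some (inl (inr i))
      end by [].
move: Hs; case: insubP => [a Ha Ea|Hn] Hs.
  have -> : N = (n.*2 + n.*2 + n * 2 - 1).+3.
    have := ltn_ord a; lia.
  rewrite (pmap_trajS _ Hs) (pmap_trajS (y := inl (inr i))) ?pmap_traj1 //.
  rewrite /= in_setT /=; congr (Some (inl (inr _))); apply: ord_inj.
  by rewrite inord_val2 negbK Ea addnC odd_double_half.
have -> : N = (n.*2 + n.*2 + n * 2).+2 by lia.
by rewrite (pmap_trajS _ Hs) pmap_traj1.
Qed.
End Ex2.

Section Ex3.
Variable n : nat.
Local Open Scope nat_scope.
Notation Nd := (node n.*2.+1 n).

Lemma trav_ex : traversal (D := exD n) setT = flatten [seq wseq i | i <- enum 'I_n.*2.+1].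
Proof. by rewrite /traversal; congr flatten; apply: eq_map => i; rewrite walk_ex. Qed.

Lemma wseq_cross (a : 'I_n) (b : bool) (j : 'I_n.*2.+1) :
  (inr (a, b) \in wseq j) = (val j == a.*2 + ~~ b).
Proof.
rewrite /wseq; case: insubP => [a' Ha' Ea'|Hn].
  rewrite !inE; apply/idP/eqP.
    case/or3P => [//|/eqP [ea eb]|//]; rewrite -[val j]odd_double_half -Ea' ea eb negbK addnC.
    by [].
  move=> ej; rewrite ej in Ea'; have ea : a' = a by apply: ord_inj; rewrite Ea' half_ab.
  by rewrite ea ej odd_ab negbK eqxx orbT.
rewrite !inE; apply/esym/negbTE; apply: contra Hn => /eqP ->.
by rewrite half_ab ltn_ord.
Qed.

Lemma mem_take_enum m (j : 'I_n.*2.+1) :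
  (j \in take m (enum 'I_n.*2.+1)) = (val j < m).
Proof.
rewrite -(mem_map val_inj) map_take val_enum_ord take_iota mem_iota.
have hj : val j < n.*2.+1 := ltn_ord j. by rewrite add0n leq_min hj andbT.
Qed.

Lemma coh_ex : coherent (D := exD n) setT.
Proof.
apply/and3P; split => //.
  apply/forallP => x; rewrite trav_ex; apply/flatten_mapP.
  case: x => [[j|j]|[a b]].
  - by exists j; rewrite ?mem_enum // /wseq; case: insubP => *; rewrite !inE eqxx.
  - by exists j; rewrite ?mem_enum // /wseq; case: insubP => *; rewrite !inE eqxx ?orbT.
  - exists (inord (a.*2 + ~~ b)); rewrite ?mem_enum // wseq_cross.
    by rewrite inord_val2.
apply/forallP => i; rewrite walk_ex /wseq.
by case: insubP.
Qed.

Lemma desc_ex : descending (D := exD n) setT.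
Proof.
apply/forall_inP => a _; rewrite trav_ex.
rewrite -(cat_take_drop (a.*2.+1) (enum 'I_n.*2.+1)) map_cat flatten_cat.
set A := flatten _.
have xA : inr (a, true) \in A.
  apply/flatten_mapP; exists (inord (a.*2 + ~~ true)).
    by rewrite mem_take_enum inord_val2 addn0.
  by rewrite wseq_cross inord_val2.
have yA : inr (a, false) \notin A.
  apply/flatten_mapP => [[j]]; rewrite mem_take_enum wseq_cross => jl /eqP ej.
  by move: jl; rewrite ej addn1 ltnn.
rewrite !index_cat xA (negbTE yA).
apply: (leq_trans _ (leq_addr _ _)); by rewrite index_mem.
Qed.
End Ex3.

Theorem mainTheorem5 (n : nat) : gpv_degree (c_inv n) n.
Proof.
split; first exact: deg_lt.
move=> H; have := H (exD n) id (@inj_id _) (fun i => in_setT i).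
rewrite alt_sum (big_pred1 [set: 'I_n]).
  by rewrite /state_sign big1.
move=> S /=; apply/idP/eqP.
  by case/and5P => _ /forallP H1 _ _ _; apply/setP => i; rewrite in_setT H1.
move=> ->; rewrite subsetT cardsT card_ord eqxx coh_ex desc_ex /= andbT.
by apply/forallP => i; rewrite in_setT.
Qed.
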